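(* For every unweighted congestion game $\mathcal{G}$ with quadratic latency functions, $\mathrm{Apx}^1_\emptyset(\mathcal{G})\le 37.5888$.
   Context: A weighted congestion game consists of a finite set $[n]=\{1,\dots,n\}$ of players, a finite set $E$ of resources, for each player $i$ a weight $w_i>0$ and a nonempty finite strategy set $\Sigma_i\subseteq 2^E$, and for each resource $e$ a latency function $\ell_e:\mathbb{R}_{\ge 0}\to\mathbb{R}_{\ge 0}$. It is unweighted if $w_i=1$ for all $i$. Quadratic latency functions means $\ell_e(x)=\sum_{j=0}^{2}\alpha_{e,j}x^j$ with all $\alpha_{e,j}\ge 0$. For a (possibly partial) profile in which each player in some subset $P\subseteq[n]$ has chosen a strategy $s_i$, the congestion of $e$ is $L_e=\sum_{i\in P:\,e\in s_i}w_i$ and the cost of a player $i\in P$ is $\sum_{e\in s_i}\ell_e(L_e)$. For a full profile $S$, $\mathrm{SUM}(S)=\sum_{i\in[n]}c_i(S)$ and $S^*$ minimizes $\mathrm{SUM}$. A one-round walk from the empty strategy profile: starting with no player having chosen a strategy, the players arrive one at a time in some order, and each arriving player selects a best response, i.e., a strategy in her strategy set minimizing her cost given the strategies already chosen by the previously arrived players (later players not yet present); the outcome is the full profile after all $n$ players have chosen. $\mathrm{Apx}^1_\emptyset(\mathcal{G})$ is the maximum, over all orderings of the players and all choices among best responses, of $\mathrm{SUM}(\text{outcome})/\mathrm{SUM}(S^* )$. *)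

(* Defs.v *)
From HB Require Import structures.
From mathcomp Require Import all_boot all_order all_algebra all_fingroup.
Set Implicit Arguments. Unset Strict Implicit. Unset Printing Implicit Defensive.
Import Order.TTheory GRing.Theory Num.Theory.
Local Open Scope ring_scope.

Section Congestion.
Variables (R : realFieldType) (n : nat) (E : finType).

Definition qlatency (a0 a1 a2 : E -> R) (e : E) (x : R) : R :=
  a0 e + a1 e * x + a2 e * x ^+ 2.

(* partial profile: None = player not (yet) present *)
Definition pprofile := 'I_n -> option {set E}.

Definition congestion (w : 'I_n -> R) (P : pprofile) (e : E) : R :=
  \sum_(i < n | if P i is Some s then e \in s else false) w i.

Definition pcost (w : 'I_n -> R) (ell : E -> R -> R) (P : pprofile) (i : 'I_n) : R :=
  if P i is Some s then \sum_(e in s) ell e (congestion w P e) else 0.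

Definition extend (P : pprofile) (i : 'I_n) (s : {set E}) : pprofile :=
  fun j => if j == i then Some s else P j.

Definition full (S : 'I_n -> {set E}) : pprofile := fun j => Some (S j).

Definition feasible (Sigma : 'I_n -> {set {set E}}) (S : 'I_n -> {set E}) :=
  forall i, S i \in Sigma i.

Definition SUM (w : 'I_n -> R) (ell : E -> R -> R) (S : 'I_n -> {set E}) : R :=
  \sum_(i < n) pcost w ell (full S) i.

Definition is_optimum w ell Sigma (Sopt : 'I_n -> {set E}) :=
  feasible Sigma Sopt /\
  forall S, feasible Sigma S -> SUM w ell Sopt <= SUM w ell S.

Definition best_response w ell (Sigma : 'I_n -> {set {set E}}) (P : pprofile)
    (i : 'I_n) (s : {set E}) :=
  s \in Sigma i /\
  forall s', s' \in Sigma i -> pcost w ell (extend P i s) i <= pcost w ell (extend P i s') i.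

(* partial profile seen by player i on arrival: players arriving before i
   (pos j < pos i, where pos j is the arrival time of j) with their choices *)
Definition before (pos : {perm 'I_n}) (S : 'I_n -> {set E}) (i : 'I_n) : pprofile :=
  fun j => if (pos j < pos i)%N then Some (S j) else None.

(* S is the outcome of a one-round walk from the empty profile with arrival
   order pos, every arriving player choosing a best response *)
Definition one_round_outcome w ell Sigma (pos : {perm 'I_n}) (S : 'I_n -> {set E}) :=
  forall i, best_response w ell Sigma (before pos S i) i (S i).

End Congestion.

(* Main.v *)
Require Import Defs.
From HB Require Import structures.
From mathcomp Require Import all_boot all_order all_algebra all_fingroup.
From mathcomp Require Import ring lra.
Import Order.TTheory GRing.Theory Num.Theory.
Local Open Scope ring_scope.

Definition kap {R : realFieldType} : R := 3309/625.
Definition cc {R : realFieldType} : R := 23493/625.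
Definition F2 {R : realFieldType} (L o : R) : R :=
  kap * ((2*L^+3+3*L^+2+L)/6 - o*(L+1)^+2) - L^+3 + cc * o^+3.
Definition F1 {R : realFieldType} (L o : R) : R :=
  kap * ((L^+2+L)/2 - o*(L+1)) - L^+2 + cc * o^+2.

Lemma F2_big (R : realFieldType) (L o : R) : 5 <= L -> 0 <= o -> 0 <= F2 L o.
Proof.
move=> hL ho; rewrite /F2 /kap /cc.
have h1 : 0 <= (o - 265/1223*(L+1))^+2 * (o + 2*(265/1223)*(L+1)).
  apply: mulr_ge0; first exact: sqr_ge0. nra.
have h2 : 0 <= (L+1)^+2 * o by apply: mulr_ge0 => //; exact: sqr_ge0.
have h3 : 0 <= (L-5)*L^+2 by apply: mulr_ge0; [lra| exact: sqr_ge0].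
have h4 : 0 <= (L-5)*L by apply: mulr_ge0; lra.
nra.
Qed.

Lemma F2_o2 (R : realFieldType) (L o : R) : 0 <= L -> L <= 5 -> 2 <= o -> 0 <= F2 L o.
Proof.
move=> hL hL5 ho; rewrite /F2 /kap /cc.
have h3 : 0 <= (o-2)*o^+2 by apply: mulr_ge0; [lra| exact: sqr_ge0].
have h4 : 0 <= (o-2)*o by apply: mulr_ge0; lra.
have h5 : 0 <= (5-L)*o by apply: mulr_ge0; lra.
have h6 : 0 <= (5-L)*L*o by apply: mulr_ge0; [apply: mulr_ge0|]; lra.
have h7 : 0 <= L^+3 by apply: exprn_ge0.
nra.
Qed.

Lemma F2_o0 (R : realFieldType) (L : R) : 0 <= L -> 0 <= F2 L 0.
Proof.
move=> hL; rewrite /F2 /kap /cc.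
have h7 : 0 <= L^+3 by apply: exprn_ge0.
have h8 : 0 <= L^+2 by apply: exprn_ge0.
nra.
Qed.

Lemma F1_ok (R : realFieldType) (L o : R) : 0 <= L -> 0 <= o -> (o = 0 \/ 1 <= o) -> 0 <= F1 L o.
Proof.
move=> hL ho [->|h1]; rewrite /F1 /kap /cc; first nra.
have h2 : 0 <= (o - 1/10 * (L+1))^+2 by exact: sqr_ge0.
nra.
Qed.
Lemma F2_nat (R : realFieldType) (L o : nat) : 0 <= F2 (L%:R : R) o%:R.
Proof.
case: (leqP 5 L) => hL.
  by apply: F2_big; [rewrite (ler_nat R 5 L) | exact: ler0n].
case: o => [|o]; first by apply: F2_o0; exact: ler0n.
case: o => [|o].
  case: L hL => [|[|[|[|[|L]]]]] // _; rewrite /F2 /kap /cc; lra.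
apply: F2_o2; [exact: ler0n| |].
  by rewrite (ler_nat R L 5) ltnW.
by rewrite (ler_nat R 2 o.+2).
Qed.

Lemma F1_nat (R : realFieldType) (L o : nat) : 0 <= F1 (L%:R : R) o%:R.
Proof.
apply: F1_ok; try exact: ler0n.
case: o => [|o]; [by left | right]; by rewrite (ler_nat R 1 o.+1).
Qed.
Definition cnt {n : nat} {E : finType} (F : 'I_n -> {set E}) (e : E) : nat :=
  \sum_i (e \in F i : nat).
Definition Ac {n : nat} {E : finType} (pos : {perm 'I_n}) (S : 'I_n -> {set E}) (i : 'I_n) (e : E) : nat :=
  \sum_j (((pos j < pos i)%N && (e \in S j)) : nat).

Lemma cong_sum (R : realFieldType) n (E : finType) (w : 'I_n -> R) (hw : forall i, w i = 1)
   (Q : pprofile n E) e :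
  congestion w Q e = (\sum_j ((if Q j is Some s then e \in s else false) : nat))%:R.
Proof.
rewrite /congestion big_mkcond natr_sum; apply: eq_bigr => j _.
by case: (Q j) => //= s; case: (e \in s); rewrite ?hw.
Qed.

Lemma cong_ext (R : realFieldType) n (E : finType) (w : 'I_n -> R) (hw : forall i, w i = 1)
   (pos : {perm 'I_n}) (S : 'I_n -> {set E}) i s e :
  congestion w (extend (before pos S i) i s) e = ((e \in s) + Ac pos S i e)%:R.
Proof.
rewrite cong_sum //; congr (_%:R); rewrite /extend /before /Ac.
rewrite (bigD1 i) //= eqxx [in RHS](bigD1 i) //= ltnn /=; congr (_ + _).
apply: eq_bigr => j hj; rewrite (negbTE hj).
by case: ifP.
Qed.

Lemma Ac_le n (E : finType) (pos : {perm 'I_n}) (S : 'I_n -> {set E}) i e :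
  (Ac pos S i e <= cnt S e)%N.
Proof. by apply: leq_sum => j _; case: (_ < _)%N; case: (e \in S j). Qed.

Lemma Ac_lt_cnt n (E : finType) (pos : {perm 'I_n}) (S : 'I_n -> {set E}) i e :
  e \in S i -> (Ac pos S i e < cnt S e)%N.
Proof.
move=> hi; rewrite /Ac /cnt (bigD1 i) //= [X in (_ < X)%N](bigD1 i) //= ltnn hi /=.
rewrite add0n add1n ltnS; apply: leq_sum => j _.
by case: (_ < _)%N; case: (e \in S j).
Qed.

Lemma Ac_lt n (E : finType) (pos : {perm 'I_n}) (S : 'I_n -> {set E}) i j e :
  (pos i < pos j)%N -> e \in S i -> (Ac pos S i e < Ac pos S j e)%N.
Proof.
move=> hij hi; rewrite /Ac (bigD1 i) //= [X in (_ < X)%N](bigD1 i) //= ltnn hij hi /=.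
rewrite add0n add1n ltnS; apply: leq_sum => k _.
case: (ltnP (pos k) (pos i)) => hk /=.
  by rewrite (ltn_trans hk hij).
by case: (_ < _)%N.
Qed.

Lemma rank_sum (R : realFieldType) n (E : finType) (pos : {perm 'I_n}) (S : 'I_n -> {set E}) e
   (g : nat -> R) :
  \sum_(i | e \in S i) g (Ac pos S i e) = \sum_(k < cnt S e) g k.
Proof.
set T := [seq i <- index_enum 'I_n | e \in S i].
have -> : \sum_(i | e \in S i) g (Ac pos S i e) = \sum_(i <- T) g (Ac pos S i e).
  by rewrite big_filter.
rewrite -(big_map (fun i => Ac pos S i e) xpredT g).
rewrite -(big_mkord xpredT g) /index_iota subn0.
apply: perm_big.
have uT : uniq T by rewrite filter_uniq // index_enum_uniq.
have inj : {in T &, injective (fun i => Ac pos S i e)}.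
  move=> i j; rewrite !mem_filter /= => /andP[hi _] /andP[hj _] hA.
  case: (ltngtP (pos i) (pos j)) => h.
  - by move: (@Ac_lt _ _ pos S i j e h hi); rewrite hA ltnn.
  - by move: (@Ac_lt _ _ pos S j i e h hj); rewrite hA ltnn.
  - by apply: (@perm_inj _ pos); apply: val_inj.
have u1 : uniq [seq Ac pos S i e | i <- T] by rewrite (map_inj_in_uniq inj).
have sub : {subset [seq Ac pos S i e | i <- T] <= iota 0 (cnt S e)}.
  move=> k /mapP[i]; rewrite mem_filter /= => /andP[hi _] ->.
  by rewrite mem_iota add0n /= (@Ac_lt_cnt _ _ pos S i e hi).
have sz : (size (iota 0 (cnt S e)) <= size [seq Ac pos S i e | i <- T])%N.
  rewrite size_iota size_map size_filter /cnt -sum1_count [X in (_ <= X)%N]big_mkcond /=.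
  by apply: leq_sum => i _; case: (e \in S i).
have [_ eqs] := uniq_min_size u1 sub sz.
by apply: uniq_perm => //; exact: iota_uniq.
Qed.
Lemma exch (R : realFieldType) n (E : finType) (F : 'I_n -> {set E}) (f : 'I_n -> E -> R) :
  \sum_i \sum_(e in F i) f i e = \sum_e \sum_(i | e \in F i) f i e.
Proof. by rewrite (exchange_big_dep xpredT) //=. Qed.

Lemma sum_cnt (R : realFieldType) n (E : finType) (F : 'I_n -> {set E}) e (x : R) :
  \sum_(i | e \in F i) x = (cnt F e)%:R * x.
Proof.
rewrite big_mkcond /cnt natr_sum mulr_suml; apply: eq_bigr => i _.
by case: (e \in F i); rewrite ?mul1r ?mul0r.
Qed.

Lemma SUM_eq (R : realFieldType) n (E : finType) (w : 'I_n -> R) (hw : forall i, w i = 1)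
  ell (F : 'I_n -> {set E}) :
  SUM w ell F = \sum_e (cnt F e)%:R * ell e (cnt F e)%:R.
Proof.
rewrite /SUM.
have -> : \sum_(i < n) pcost w ell (full F) i = \sum_i \sum_(e in F i) ell e (cnt F e)%:R.
  apply: eq_bigr => i _; rewrite /pcost /full; apply: eq_bigr => e _.
  by rewrite cong_sum.
rewrite exch; apply: eq_bigr => e _; by rewrite sum_cnt.
Qed.

Lemma pot_closed (R : realFieldType) (E : finType) (a0 a1 a2 : E -> R) e (L : nat) :
  \sum_(k < L) qlatency a0 a1 a2 e (k.+1)%:R =
  a0 e * L%:R + a1 e * ((L%:R^+2 + L%:R)/2) + a2 e * ((2*L%:R^+3 + 3*L%:R^+2 + L%:R)/6).
Proof.
elim: L => [|L IH]; first by rewrite big_ord0; field.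
by rewrite big_ord_recr /= IH /qlatency -natr1; field.
Qed.

Lemma per_res (R : realFieldType) (E : finType) (a0 a1 a2 : E -> R)
  (ha : forall e, 0 <= a0 e /\ 0 <= a1 e /\ 0 <= a2 e) e (L o : nat) :
  L%:R * qlatency a0 a1 a2 e L%:R - cc * (o%:R * qlatency a0 a1 a2 e o%:R) <=
  kap * (\sum_(k < L) qlatency a0 a1 a2 e (k.+1)%:R - o%:R * qlatency a0 a1 a2 e (L%:R + 1)).
Proof.
rewrite pot_closed -subr_ge0.
have h1 := F1_nat R L o; have h2 := F2_nat R L o.
have h0 : 0 <= (kap - 1) * (L%:R : R) + (cc - kap) * o%:R.
  have hL : 0 <= (L%:R : R) := ler0n _ _. have ho : 0 <= (o%:R : R) := ler0n _ _.
  rewrite /kap /cc; nra.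
have [ha0 [ha1 ha2]] := ha e.
have -> : kap * (a0 e * L%:R + a1 e * ((L%:R ^+ 2 + L%:R) / 2) +
     a2 e * ((2 * L%:R ^+ 3 + 3 * L%:R ^+ 2 + L%:R) / 6) -
     o%:R * qlatency a0 a1 a2 e (L%:R + 1)) -
  (L%:R * qlatency a0 a1 a2 e L%:R - cc * (o%:R * qlatency a0 a1 a2 e o%:R)) =
  a0 e * ((kap - 1) * (L%:R : R) + (cc - kap) * o%:R) + a1 e * F1 L%:R o%:R + a2 e * F2 L%:R o%:R.
  by rewrite /F1 /F2 /qlatency /kap /cc; field.
by rewrite !addr_ge0 // mulr_ge0.
Qed.

Lemma ell_mono (R : realFieldType) (E : finType) (a0 a1 a2 : E -> R)
  (ha : forall e, 0 <= a0 e /\ 0 <= a1 e /\ 0 <= a2 e) e (x y : R) :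
  0 <= x -> x <= y -> qlatency a0 a1 a2 e x <= qlatency a0 a1 a2 e y.
Proof.
move=> hx hxy; have [ha0 [ha1 ha2]] := ha e; rewrite /qlatency.
have h1 : 0 <= a1 e * (y - x) by apply: mulr_ge0; lra.
have h2 : 0 <= a2 e * ((y - x) * (y + x)) by apply: mulr_ge0 => //; apply: mulr_ge0; lra.
nra.
Qed.

Lemma pcost_ext (R : realFieldType) n (E : finType) (w : 'I_n -> R) ell (P : pprofile n E) i s :
  pcost w ell (extend P i s) i = \sum_(e in s) ell e (congestion w (extend P i s) e).
Proof. by rewrite /pcost {1}/extend eqxx. Qed.

Theorem mainTheorem11 (R : realFieldType) (n : nat) (E : finType)
    (w : 'I_n -> R) (Sigma : 'I_n -> {set {set E}}) (a0 a1 a2 : E -> R) :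
  (forall i, w i = 1) ->
  (forall i, Sigma i != set0) ->
  (forall e, 0 <= a0 e /\ 0 <= a1 e /\ 0 <= a2 e) ->
  forall (pos : {perm 'I_n}) (S Sopt : 'I_n -> {set E}),
    one_round_outcome w (qlatency a0 a1 a2) Sigma pos S ->
    is_optimum w (qlatency a0 a1 a2) Sigma Sopt ->
    SUM w (qlatency a0 a1 a2) S <= (375888%:R / 10000%:R) * SUM w (qlatency a0 a1 a2) Sopt.
Proof.
move=> hw _ ha pos S Sopt hS [hfeas _].
set ell := qlatency a0 a1 a2.
have -> : (375888%:R / 10000%:R : R) = cc by rewrite /cc; field.
have br : forall i, \sum_(e in S i) ell e (Ac pos S i e).+1%:R <=
                    \sum_(e in Sopt i) ell e ((cnt S e)%:R + 1).
  move=> i; have [_ H] := hS i; have := H (Sopt i) (hfeas i).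
  rewrite !pcost_ext.
  rewrite (eq_bigr (fun e => ell e (Ac pos S i e).+1%:R)); last first.
    by move=> e he; rewrite (@cong_ext _ _ _ w hw) he.
  rewrite [X in _ <= X -> _](eq_bigr (fun e => ell e (Ac pos S i e).+1%:R)); last first.
    by move=> e he; rewrite (@cong_ext _ _ _ w hw) he.
  move=> /le_trans; apply; apply: ler_sum => e _.
  apply: ell_mono; [exact: ha | exact: ler0n |].
  by rewrite -natr1 lerD2r ler_nat; exact: Ac_le.
have pot : \sum_i \sum_(e in S i) ell e (Ac pos S i e).+1%:R =
           \sum_e \sum_(k < cnt S e) ell e (k.+1)%:R.
  rewrite exch; apply: eq_bigr => e _.
  exact: (@rank_sum _ _ _ pos S e (fun k => ell e (k.+1)%:R)).
have dev : \sum_i \sum_(e in Sopt i) ell e ((cnt S e)%:R + 1) =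
           \sum_e (cnt Sopt e)%:R * ell e ((cnt S e)%:R + 1).
  by rewrite exch; apply: eq_bigr => e _; rewrite sum_cnt.
have key : \sum_e \sum_(k < cnt S e) ell e (k.+1)%:R <=
           \sum_e (cnt Sopt e)%:R * ell e ((cnt S e)%:R + 1).
  by rewrite -pot -dev; apply: ler_sum => i _; exact: br.
rewrite !(@SUM_eq _ _ _ w hw) -subr_ge0.
have hk : 0 <= (kap : R) by rewrite /kap; lra.
apply: (@le_trans _ _ (kap * (\sum_e (cnt Sopt e)%:R * ell e ((cnt S e)%:R + 1)
                          - \sum_e \sum_(k < cnt S e) ell e (k.+1)%:R))).
  by apply: mulr_ge0 => //; rewrite subr_ge0.
rewrite -subr_ge0.
have -> : cc * \sum_e (cnt Sopt e)%:R * ell e (cnt Sopt e)%:R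
   - \sum_e (cnt S e)%:R * ell e (cnt S e)%:R
   - kap * (\sum_e (cnt Sopt e)%:R * ell e ((cnt S e)%:R + 1)
            - \sum_e \sum_(k < cnt S e) ell e (k.+1)%:R) =
   \sum_e (cc * ((cnt Sopt e)%:R * ell e (cnt Sopt e)%:R)
          - (cnt S e)%:R * ell e (cnt S e)%:R
          - kap * ((cnt Sopt e)%:R * ell e ((cnt S e)%:R + 1)
                   - \sum_(k < cnt S e) ell e (k.+1)%:R)).
  by rewrite !sumrB -!mulr_sumr sumrB.
apply: sumr_ge0 => e _.
have := @per_res R E a0 a1 a2 ha e (cnt S e) (cnt Sopt e).
rewrite -/ell; lra.
Qed.
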